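(* Let $G_0$ be a fixed $n\times l$ binary matrix, $G_1$ a fixed $n\times k$ binary matrix, $\mathbf m\in\{0,1\}^k$ fixed, and $1\le u\le n$. Then $$P(E=0\mid U=u)\le \min\left\{\frac{\sum_{w=d_0}^{u} B_{0,w}\binom{n-w}{u-w}}{\binom{n}{u}},\;1\right\}.$$
   Context: All arithmetic is over $\mathrm{GF}(2)$. $\mathcal C_0^{\perp}=\{\mathbf x\in\{0,1\}^n: G_0^T\mathbf x=\mathbf 0\}$; $B_{0,w}$ is the number of vectors of Hamming weight $w$ in $\mathcal C_0^\perp$, and $d_0$ is the minimum Hamming weight of a nonzero vector of $\mathcal C_0^\perp$ (empty sums are $0$). Defect model: each of the $n$ memory cells is independently defective with probability $\beta\in(0,1)$; a defective cell is stuck at $0$ or at $1$, each with probability $1/2$, independently. Let $\mathcal U$ be the set of defect positions, $U=|\mathcal U|$, $\mathbf s^{\mathcal U}$ the vector of stuck-at values; conditionally on $U=u$, $\mathcal U$ is a uniform random $u$-subset and $\mathbf s^{\mathcal U}$ is uniform on $\{0,1\}^u$. For a matrix $M$ (resp. vector $\mathbf v$) with rows indexed by $\{1,\dots,n\}$, $M^{\mathcal U}$ (resp. $\mathbf v^{\mathcal U}$) denotes the rows indexed by $\mathcal U$. Encoding: with $\mathbf b^{\mathcal U}=(G_1\mathbf m)^{\mathcal U}+\mathbf s^{\mathcal U}$, look for $\mathbf d\in\{0,1\}^l$ with $G_0^{\mathcal U}\mathbf d=\mathbf b^{\mathcal U}$; $E=1$ if such $\mathbf d$ exists and $E=0$ (encoding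 failure) otherwise. *)

(* Defs.v *)
From HB Require Import structures.
From mathcomp Require Import all_boot all_order all_algebra.
Set Implicit Arguments. Unset Strict Implicit. Unset Printing Implicit Defensive.
Import Order.TTheory GRing.Theory Num.Theory.
Local Open Scope ring_scope.

Notation F2 := 'F_2.

Definition hwt (n : nat) (x : 'cV[F2]_n) : nat := #|[set i : 'I_n | x i 0 != 0]|.

Definition in_dual (n l : nat) (G0 : 'M[F2]_(n, l)) (x : 'cV[F2]_n) : bool :=
  G0^T *m x == 0.

Definition Bw (n l : nat) (G0 : 'M[F2]_(n, l)) (w : nat) : nat :=
  #|[set x : 'cV[F2]_n | in_dual G0 x && (hwt x == w)]|.

(* d_0: minimum weight of a nonzero dual codeword; if there is none we use
   n.+1, which makes the sum from d_0 to u <= n empty (value 0). *)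
Definition d0 (n l : nat) (G0 : 'M[F2]_(n, l)) : nat :=
  \big[minn/n.+1]_(x : 'cV[F2]_n | in_dual G0 x && (x != 0)) hwt x.

(* A defect pattern: for each cell, None = not defective,
   Some b = defective, stuck at b. *)
Definition pattern (n : nat) := {ffun 'I_n -> option F2}.

Definition ndef (n : nat) (p : pattern n) : nat := #|[set i : 'I_n | p i != None]|.

Definition encodable (n l k : nat) (G0 : 'M[F2]_(n, l)) (G1 : 'M[F2]_(n, k))
  (m : 'cV[F2]_k) (p : pattern n) : bool :=
  [exists d : 'cV[F2]_l, [forall i : 'I_n,
     if p i is Some s then (G0 *m d) i 0 == (G1 *m m) i 0 + s else true]].

(* Probability of a pattern: each cell independently defective with prob.
   beta, stuck at 0 or 1 with prob. 1/2 each. *)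
Definition pat_prob (R : realFieldType) (beta : R) (n : nat) (p : pattern n) : R :=
  \prod_(i < n) (if p i is Some _ then beta / 2%:R else 1 - beta).

Definition prob_fail_given_U (R : realFieldType) (beta : R) (n l k : nat)
  (G0 : 'M[F2]_(n, l)) (G1 : 'M[F2]_(n, k)) (m : 'cV[F2]_k) (u : nat) : R :=
  (\sum_(p : pattern n | (ndef p == u) && ~~ encodable G0 G1 m p) pat_prob beta p)
  / (\sum_(p : pattern n | ndef p == u) pat_prob beta p).

(* Main.v *)
Require Import Defs.
From HB Require Import structures.
From mathcomp Require Import all_boot all_order all_algebra.
Set Implicit Arguments. Unset Strict Implicit. Unset Printing Implicit Defensive.
Import Order.TTheory GRing.Theory Num.Theory.

From mathcomp Require Import ring.
Definition supp n (p : pattern n) : {set 'I_n} := [set i | p i != None].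

Lemma card_fiber n (S : {set 'I_n}) :
  #|[set p : pattern n | supp p == S]| = 2 ^ #|S|.
Proof.
pose F := fun i : 'I_n => [pred o : option 'F_2 | (o != None) == (i \in S)].
have -> : [set p : pattern n | supp p == S] = [set p in family F].
  apply/setP => p; rewrite !inE; apply/eqP/familyP => [Hs i|H].
    by rewrite /F inE -Hs /supp inE.
  by apply/setP => i; rewrite /supp inE; have := H i; rewrite /F inE => /eqP.
rewrite cardsE card_family.
have -> : foldr muln 1 [seq #|F x| | x : 'I_n] = \prod_(x : 'I_n) #|F x|.
  by rewrite foldrE /image_mem big_map big_enum.
transitivity (\prod_(i in S) 2); last by rewrite prod_nat_const.
rewrite [RHS]big_mkcond /=; apply: eq_bigr => i _.
case: ifP => iS; rewrite /F iS.
  have -> : #|[pred o : option 'F_2 | (o != None) == true]| = #|predC1 (None : option 'F_2)|.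
    by apply: eq_card => o; rewrite !inE eqb_id.
  by rewrite cardC1 card_option card_Fp.
have -> : #|[pred o : option 'F_2 | (o != None) == false]| = #|pred1 (None : option 'F_2)|.
  by apply: eq_card => o; rewrite !inE eqbF_neg negbK.
by rewrite card1.
Qed.

Lemma card_patterns n (Q : pred {set 'I_n}) :
  #|[set p : pattern n | Q (supp p)]| = \sum_(S | Q S) 2 ^ #|S|.
Proof.
rewrite -sum1_card (partition_big (@supp n) Q) /=; last by move=> p; rewrite inE.
apply: eq_bigr => S QS; rewrite -card_fiber -sum1_card; apply: eq_bigl => p.
rewrite !inE; case: eqP => [->|]; by rewrite ?QS ?andbF.
Qed.

Local Open Scope ring_scope.
Definition bad n l (G0 : 'M['F_2]_(n, l)) (S : {set 'I_n}) : bool :=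
  [exists x : 'cV['F_2]_n, [&& in_dual G0 x, x != 0 &
     [forall i, (x i 0 != 0) ==> (i \in S)]]].


Lemma col_mulmx (R : pzSemiRingType) a b q (A : 'M[R]_(a, b)) (K : 'M[R]_(b, q)) j :
  A *m col j K = col j (A *m K).
Proof. by rewrite !colE mulmxA. Qed.

Lemma good_enc n l k (G0 : 'M['F_2]_(n, l)) (G1 : 'M['F_2]_(n, k)) m (p : pattern n) :
  ~~ bad G0 (supp p) -> encodable G0 G1 m p.
Proof.
move=> nb.
set S := supp p.
pose P : 'M['F_2]_n := diag_mx (\row_i ((i \in S)%:R)).
pose c : 'cV['F_2]_n := G1 *m m + \col_i (odflt 0 (p i)).
pose B := G0^T *m P.
have sub : (c^T *m P <= B)%MS.
  rewrite submxE; apply/eqP/matrixP => z j; rewrite (ord1 z) [RHS]mxE.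
  apply/eqP; apply/negPn/negP => nz.
  move/negP: nb; apply; apply/existsP.
  pose y := col j (cokermx B).
  exists (P *m y); apply/and3P; split.
  - rewrite /in_dual mulmxA -/B.
    rewrite /y col_mulmx.
    by rewrite mulmx_coker; apply/eqP/matrixP => a b; rewrite !mxE.
  - apply/negP => /eqP P0; apply/negP: nz.
    have -> : (c^T *m P *m cokermx B) 0 j = (c^T *m (P *m y)) 0 0.
      by rewrite mulmxA /y col_mulmx [RHS]mxE.
    by rewrite P0 mulmx0 mxE negbK.
  - apply/forallP => i; apply/implyP; rewrite mul_diag_mx !mxE.
    by case: (i \in S); rewrite ?mul0r ?eqxx.
case/submxP: sub => D HD.
apply/existsP; exists D^T; apply/forallP => i.
case Hp: (p i) => [s|] //.
have iS : i \in S by rewrite /S /supp inE Hp.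
have := congr1 (fun M => (M^T) i 0) HD.
rewrite /B !trmx_mul !trmxK tr_diag_mx -mulmxA !mul_diag_mx !mxE iS mul1r.
by rewrite Hp /= mul1r => <-.
Qed.

Local Close Scope ring_scope.

Lemma card_supsets n (A : {set 'I_n}) u :
  #|[set S : {set 'I_n} | (#|S| == u) && (A \subset S)]| <=
    (#|A| <= u) * 'C(n - #|A|, u - #|A|).
Proof.
case: (leqP #|A| u) => hA; last first.
  rewrite mul0n leqn0 cards_eq0; apply/eqP/setP => S; rewrite !inE.
  apply/negbTE/negP => /andP[/eqP hS sub].
  by have := subset_leq_card sub; rewrite hS leqNgt hA.
rewrite mul1n.
have rec : forall S : {set 'I_n}, A \subset S -> S = A :|: (S :\: A).
  by move=> S sub; rewrite -{1}(setID S A) (setIidPr sub).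
rewrite -(card_in_imset (f := fun S => S :\: A)); last first.
  move=> S1 S2; rewrite !inE => /andP[_ s1] /andP[_ s2] e.
  by rewrite (rec _ s1) (rec _ s2) /= e.
have -> : n - #|A| = #|~: A| by rewrite -{1}(card_ord n) -(cardsC A) addKn.
rewrite -cards_draws; apply: subset_leq_card; apply/subsetP => B /imsetP[S].
rewrite inE => /andP[/eqP hS sub] ->.
rewrite inE; apply/andP; split; first by rewrite setDE subsetIr.
by rewrite cardsDS // hS.
Qed.

Lemma bigmin_le (T : eqType) (r : seq T) (P : pred T) (F : T -> nat) d y :
  y \in r -> P y -> \big[minn/d]_(x <- r | P x) F x <= F y.
Proof.
elim: r => // a r IH; rewrite inE big_cons => /orP[/eqP ->|yr] Py.
  by rewrite Py geq_minl.
case: (P a); last exact: IH.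
by rewrite geq_min IH ?orbT.
Qed.

Definition suppx n (x : 'cV['F_2]_n) : {set 'I_n} := [set i | (x i 0 != 0)%R].

Lemma bad_count n l (G0 : 'M['F_2]_(n, l)) u :
  #|[set S : {set 'I_n} | (#|S| == u) && bad G0 S]| <=
  \sum_(d0 G0 <= w < u.+1) Bw G0 w * 'C(n - w, u - w).
Proof.
pose dn (x : 'cV['F_2]_n) := in_dual G0 x && (x != 0%R).
apply: (@leq_trans (\sum_(x : 'cV['F_2]_n) (dn x * ((hwt x <= u) * 'C(n - hwt x, u - hwt x))))).
  rewrite -sum1_card big_mkcond /=.
  apply: (@leq_trans (\sum_(S : {set 'I_n}) \sum_(x : 'cV['F_2]_n)
     ((dn x && (#|S| == u) && (suppx x \subset S)) : nat))).
    apply: leq_sum => S _; rewrite inE.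
    case/boolP: (#|S| == u) => //= hS; case/boolP: (bad G0 S) => //= /existsP[x /and3P[hd hnz hsub]].
    rewrite (bigD1 x) //= /dn hd hnz /=.
    have -> : suppx x \subset S.
      apply/subsetP => i; rewrite inE => hi; exact: (implyP (forallP hsub i) hi).
    by [].
  rewrite exchange_big /=; apply: leq_sum => x _.
  case: (boolP (dn x)) => /= hx; last by rewrite big1.
  rewrite mul1n.
  apply: leq_trans (card_supsets (suppx x) u).
  rewrite -sum1_card [X in _ <= X]big_mkcond /=; apply: leq_sum => S _; rewrite inE.
  by case: (_ && _).
apply: (@leq_trans (\sum_(x : 'cV['F_2]_n) \sum_(d0 G0 <= w < u.+1)
     ((in_dual G0 x && (hwt x == w)) * 'C(n - w, u - w)))).
  apply: leq_sum => x _.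
  case: (boolP (dn x)) => /= hx; last by [].
  case: (leqP (hwt x) u) => /= hu; last by [].
  rewrite !mul1n.
  have hd : d0 G0 <= hwt x.
    rewrite /d0; apply: bigmin_le; first exact: mem_index_enum.
    exact: hx.
  rewrite (bigD1_seq (hwt x)) /=; first last.
  - exact: iota_uniq.
  - by rewrite mem_index_iota hd ltnS.
  by move: hx; rewrite /dn => /andP[-> _]; rewrite eqxx mul1n leq_addr.
rewrite exchange_big /=; apply: leq_sum => w _.
rewrite -big_distrl /= leq_mul2r; apply/orP; right.
rewrite /Bw -sum1_card [X in _ <= X]big_mkcond /=; apply: leq_sum => x _.
by rewrite inE.
Qed.

Local Open Scope ring_scope.

Lemma cardsC_ord n (A : {set 'I_n}) : #|~: A| = (n - #|A|)%N.
Proof.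
have H := cardsC A; rewrite card_ord in H.
apply/eqP; rewrite -(eqn_add2l #|A|) H subnKC //.
by move: (leq_addr #|~: A| #|A|); rewrite H.
Qed.

Lemma pat_prob_u (R : realFieldType) (beta : R) n (p : pattern n) u :
  ndef p = u ->
  pat_prob beta p = (beta / 2%:R) ^+ u * (1 - beta) ^+ (n - u).
Proof.
move=> hu; rewrite /pat_prob (bigID (fun i => p i != None)) /=.
rewrite (eq_bigl (fun i => i \in supp p)); last by move=> i; rewrite inE.
rewrite [X in _ * X](eq_bigl (fun i => i \in ~: supp p)); last by move=> i; rewrite !inE.
rewrite (eq_bigr (fun _ => beta / 2%:R)); last by move=> i; rewrite inE; case: (p i).
rewrite (eq_bigr (fun _ => 1 - beta) (P := fun i => i \in ~: supp p)); last by move=> i; rewrite !inE; case: (p i).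
rewrite !prodr_const.
have -> : #|~: supp p| = (n - u)%N by rewrite -hu cardsC_ord.
by rewrite -hu.
Qed.

Lemma sum_pat (R : realFieldType) (beta : R) n u (P : pred (pattern n)) :
  (forall p, P p -> ndef p = u) ->
  \sum_(p | P p) pat_prob beta p =
  (#|[set p | P p]|)%:R * ((beta / 2%:R) ^+ u * (1 - beta) ^+ (n - u)).
Proof.
move=> hP.
rewrite (eq_bigr (fun _ => (beta / 2%:R) ^+ u * (1 - beta) ^+ (n - u))); last first.
  by move=> p /hP; apply: pat_prob_u.
rewrite (eq_bigl (fun p => p \in [set p | P p])); last by move=> p; rewrite inE.
by rewrite sumr_const mulr_natl.
Qed.

Theorem lemma1 (R : realFieldType) (beta : R) (hb0 : 0 < beta) (hb1 : beta < 1)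
  (n l k : nat) (G0 : 'M['F_2]_(n, l)) (G1 : 'M['F_2]_(n, k)) (m : 'cV['F_2]_k)
  (u : nat) (hu1 : (1 <= u)%N) (hun : (u <= n)%N) :
  prob_fail_given_U beta G0 G1 m u <=
  Num.min ((\sum_(d0 G0 <= w < u.+1) (Bw G0 w)%:R * ('C(n - w, u - w))%:R)
             / ('C(n, u))%:R) 1.
Proof.
set N := (\sum_(d0 G0 <= w < u.+1) Bw G0 w * 'C(n - w, u - w))%N.
have -> : \sum_(d0 G0 <= w < u.+1) (Bw G0 w)%:R * ('C(n - w, u - w))%:R = N%:R :> R.
  by rewrite /N natr_sum; apply: eq_bigr => w _; rewrite natrM.
set Fn := #|[set p : pattern n | (ndef p == u) && ~~ encodable G0 G1 m p]|.
set An := #|[set p : pattern n | ndef p == u]|.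
have hA : An = (2 ^ u * 'C(n, u))%N.
  rewrite /An (card_patterns (fun S => #|S| == u)).
  rewrite (eq_bigr (fun _ => 2 ^ u)%N); last by move=> S /eqP ->.
  rewrite (eq_bigl (fun S => S \in [set S : {set 'I_n} | #|S| == u])); last by move=> S; rewrite inE.
  by rewrite sum_nat_const card_draws card_ord mulnC.
have hFA : (Fn <= An)%N.
  by apply: subset_leq_card; apply/subsetP => p; rewrite !inE => /andP[].
have hFN : (Fn <= 2 ^ u * N)%N.
  apply: (@leq_trans #|[set p : pattern n | (#|supp p| == u) && bad G0 (supp p)]|).
    apply: subset_leq_card; apply/subsetP => p; rewrite !inE => /andP[-> /=].
    by apply: contraR => /good_enc; apply.
  rewrite (card_patterns (fun S => (#|S| == u) && bad G0 S)).
  rewrite (eq_bigr (fun _ => 2 ^ u)%N); last by move=> S /andP[/eqP -> _].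
  rewrite (eq_bigl (fun S => S \in [set S : {set 'I_n} | (#|S| == u) && bad G0 S])); last by move=> S; rewrite inE.
  by rewrite sum_nat_const mulnC leq_mul2l bad_count orbT.
have Cpos : (0 < 'C(n, u))%N by rewrite bin_gt0.
have Apos : (0 < An)%N by rewrite hA muln_gt0 expn_gt0 Cpos.
have cpos : 0 < (beta / 2%:R) ^+ u * (1 - beta) ^+ (n - u).
  by rewrite mulr_gt0 // exprn_gt0 // ?divr_gt0 // ?subr_gt0.
have -> : prob_fail_given_U beta G0 G1 m u = Fn%:R / An%:R.
  rewrite /prob_fail_given_U (@sum_pat R beta n u); last by move=> p /andP[/eqP].
  rewrite (@sum_pat R beta n u); last by move=> p /eqP.
  rewrite -mulf_div divff ?mulr1 //; last by rewrite gt_eqF.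
have AposR : 0 < An%:R :> R by rewrite ltr0n.
rewrite le_min; apply/andP; split.
  rewrite ler_pdivrMr //.
  have -> : N%:R / ('C(n, u))%:R * An%:R = (2 ^ u * N)%:R :> R.
    have Cn0 : ('C(n, u))%:R != 0 :> R by rewrite pnatr_eq0 -lt0n.
    rewrite hA !natrM; field.
    exact: Cn0.
  by rewrite ler_nat.
by rewrite ler_pdivrMr // mul1r ler_nat.
Qed.
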